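(* Let $\Gamma$ be a connected signed graph on $N$ vertices and, for real $t$, let $\mathcal{L}(t)=\mathcal{L}(\Gamma(t))$. The subspace $\mathbf{1}^\perp=\{v\in\mathbb{R}^N:\sum_i v_i=0\}$ is invariant under every $\mathcal{L}(t)$; let $\lambda_1(t),\dots,\lambda_{N-1}(t)$ be the (analytic) eigenvalue branches of $\mathcal{L}(t)$ restricted to $\mathbf{1}^\perp$. Then each $\lambda_i(t)$ is a non-decreasing function of $t$, and each crosses zero transversely: if $\lambda_i(t)=0$ then $\lambda_i'(t)>0$.
   Context: A signed graph $\Gamma$ is a finite simple undirected graph with vertex set $\{1,\dots,N\}$ in which every edge $\{i,j\}$ carries a nonzero real weight $\gamma_{ij}$, which may be of either sign. For real $t$, $\Gamma(t)$ is the weighted graph with the same edges and weights $\gamma_{ij}(t)=\gamma_{ij}$ if $\gamma_{ij}>0$ and $\gamma_{ij}(t)=t\gamma_{ij}$ if $\gamma_{ij}<0$. For a weighted graph with weights $w_{ij}$, its Laplacian is the symmetric matrix with off-diagonal entries $w_{ij}$ (zero for non-edges) and diagonal entries $-\sum_{k\ne i}w_{ik}$. $\mathbf{1}=(1,\dots,1)$. *)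

(* Defs.v *)
From HB Require Import structures.
From mathcomp Require Import all_boot all_order all_algebra.
From mathcomp Require Import all_classical all_reals all_analysis.
Set Implicit Arguments. Unset Strict Implicit. Unset Printing Implicit Defensive.
Import Order.TTheory GRing.Theory Num.Theory.
Local Open Scope ring_scope.

(* A signed graph on the vertex set 'I_N (= {1,..,N} shifted) is given by its
   weight function g : g i j <> 0 iff {i,j} is an edge, with weight g i j.
   Simple undirected graph: symmetric, no loops. *)
Definition signed_graph (R : realType) (N : nat) (g : 'I_N -> 'I_N -> R) : Prop :=
  (forall i j, g i j = g j i) /\ (forall i, g i i = 0).

Definition sg_connected (R : realType) (N : nat) (g : 'I_N -> 'I_N -> R) : Prop :=
  forall i j : 'I_N, connect (fun a b => g a b != 0) i j.

Definition gamma_t (R : realType) (N : nat) (g : 'I_N -> 'I_N -> R) (t : R) :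
  'I_N -> 'I_N -> R :=
  fun i j => if g i j < 0 then t * g i j else g i j.

Definition laplacian (R : realType) (N : nat) (w : 'I_N -> 'I_N -> R) : 'M[R]_N :=
  \matrix_(i, j) (if i == j then - \sum_(k | k != i) w i k else w i j).

Definition Lt (R : realType) (N : nat) (g : 'I_N -> 'I_N -> R) (t : R) : 'M[R]_N :=
  laplacian (gamma_t g t).

Definition eigen_branch (R : realType) (N : nat) (g : 'I_N -> 'I_N -> R)
  (lam : R -> R) (v : 'I_N -> R -> R) : Prop :=
  forall t : R,
    [/\ (\col_i v i t) != 0,
        \sum_i v i t = 0 &
        Lt g t *m (\col_i v i t) = lam t *: (\col_i v i t)].

(* Main.v *)
Require Import Defs.
From HB Require Import structures.
From mathcomp Require Import all_boot all_order all_algebra.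
From mathcomp Require Import all_classical all_reals all_analysis.
From mathcomp Require Import ring lra.
Import Order.TTheory GRing.Theory Num.Theory.
Local Open Scope ring_scope.

Section Alg.
Variables (R : realType) (N : nat).
Implicit Types (w : 'I_N -> 'I_N -> R) (x y : 'I_N -> R).

Definition lapv w y i := \sum_j w i j * (y j - y i).

Lemma lap_row w y i : w i i = 0 ->
  (laplacian w *m \col_k y k) i 0 = lapv w y i.
Proof.
move=> wii; rewrite /laplacian mxE /lapv (bigD1 i) //= [RHS](bigD1 i) //= !mxE eqxx wii mul0r add0r mulNr mulr_suml -sumrN -big_split /=.
apply: eq_bigr => j ji; rewrite !mxE eq_sym (negbTE ji); ring.
Qed.

Lemma lapv_sym w x y : (forall i j, w i j = w j i) ->
  \sum_i x i * lapv w y i = \sum_i y i * lapv w x i.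
Proof.
move=> ws; apply/eqP; rewrite -subr_eq0; apply/eqP.
rewrite /lapv -sumrB.
under eq_bigr do rewrite !mulr_sumr -sumrB.
set S := (X in X = 0).
have HS : S = - S.
  rewrite {1}/S exchange_big /S -sumrN; apply: eq_bigr => i _.
  rewrite -sumrN; apply: eq_bigr => j _; rewrite (ws j i); ring.
have : S *+ 2 = 0 by rewrite mulr2n {1}HS addNr.
by move/eqP; rewrite mulrn_eq0 /= => /eqP.
Qed.

Lemma lapv_quad w x : (forall i j, w i j = w j i) ->
  (\sum_i x i * lapv w x i) *+ 2 = - \sum_i \sum_j w i j * (x i - x j) ^+ 2.
Proof.
move=> ws; rewrite mulr2n {2}(_ : \sum_i x i * lapv w x i =
   \sum_i \sum_j w i j * x j * (x i - x j)).
  rewrite /lapv -big_split -sumrN /=; apply: eq_bigr => i _.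
  rewrite mulr_sumr -big_split -sumrN /=; apply: eq_bigr => j _; ring.
rewrite /lapv exchange_big; apply: eq_bigr => i _.
rewrite mulr_sumr; apply: eq_bigr => j _; rewrite (ws j i); ring.
Qed.


Lemma lapvN w y i : lapv (fun a b => - w a b) y i = - lapv w y i.
Proof. by rewrite /lapv -sumrN; apply: eq_bigr => j _; rewrite mulNr. Qed.

Lemma quad_ge0 w x : (forall i j, w i j = w j i) -> (forall i j, w i j <= 0) ->
  0 <= \sum_i x i * lapv w x i.
Proof.
move=> ws wn; rewrite -(pmulrn_lge0 _ (isT : (0 < 2)%N)) lapv_quad // oppr_ge0.
apply: sumr_le0 => i _; apply: sumr_le0 => j _.
by rewrite mulr_le0_ge0 // sqr_ge0.
Qed.

Lemma quad_eq0 w x : (forall i j, w i j = w j i) -> (forall i j, w i j <= 0) ->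
  \sum_i x i * lapv w x i = 0 -> forall i j, w i j != 0 -> x i = x j.
Proof.
move=> ws wn h0 i j wij.
have := lapv_quad w x ws; rewrite h0 mul0rn => /eqP; rewrite eq_sym oppr_eq0 => /eqP E.
have T0 : forall k l, 0 <= - w k l * (x k - x l) ^+ 2.
  by move=> k l; rewrite mulNr oppr_ge0 mulr_le0_ge0 // sqr_ge0.
have E' : \sum_k \sum_l - w k l * (x k - x l) ^+ 2 = - \sum_k \sum_l w k l * (x k - x l) ^+ 2.
  rewrite -sumrN; apply: eq_bigr => k _.
  by rewrite -sumrN; apply: eq_bigr => l _; rewrite mulNr.
rewrite E oppr0 in E'.
have Hk : forall k : 'I_N, true -> 0 <= \sum_l - w k l * (x k - x l) ^+ 2.
  by move=> k _; apply: sumr_ge0 => l _; exact: T0.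
have := psumr_eq0P Hk E' isT.
move=> Hi; have /eqP : - w i j * (x i - x j) ^+ 2 = 0 := psumr_eq0P (fun l _ => T0 i l) (Hi i) isT.
rewrite mulf_eq0 oppr_eq0 (negbTE wij) /= sqrf_eq0 subr_eq0 => /eqP //.
Qed.

End Alg.
Arguments lapv {R N}.
Arguments lap_row {R N}.
Arguments lapv_sym {R N}.
Arguments lapv_quad {R N}.
Arguments lapvN {R N}.
Arguments quad_ge0 {R N}.
Arguments quad_eq0 {R N}.

Definition pw (R : realType) N (g : 'I_N -> 'I_N -> R) i j :=
  if g i j < 0 then 0 else g i j.
Definition nw (R : realType) N (g : 'I_N -> 'I_N -> R) i j :=
  if g i j < 0 then g i j else 0.
Arguments pw {R N}.
Arguments nw {R N}.

Lemma lapv_gamma (R : realType) N (g : 'I_N -> 'I_N -> R) s y i :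
  lapv (gamma_t g s) y i = lapv (pw g) y i + s * lapv (nw g) y i.
Proof.
rewrite /lapv mulr_sumr -big_split; apply: eq_bigr => j _ /=.
rewrite /gamma_t /pw /nw; case: ifP => _; ring.
Qed.

Lemma derivable_lin (R : realType) N (c : 'I_N -> R) (v : 'I_N -> R -> R) t :
  (forall i, derivable (v i) t 1) -> derivable (fun s => \sum_i c i * v i s) t 1.
Proof.
move=> hv; have := @derivable_sum _ _ _ N (fun i s => c i * v i s) t 1.
rewrite fct_sumE; apply => i.
have -> : (fun s => c i * v i s) = (cst (c i) * v i) by apply/funext.
by apply: derivableM => //; apply: derivable_cst.
Qed.

Lemma path_const (R : realType) N (e : rel 'I_N) (x : 'I_N -> R) :
  (forall a b, e a b -> x a = x b) ->
  forall p a, path e a p -> x a = x (last a p).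
Proof.
move=> he; elim => [|b p IH] a //= /andP [eab pp].
by rewrite (he _ _ eab); exact: IH.
Qed.

Section Main.
Variables (R : realType) (N : nat) (g : 'I_N -> 'I_N -> R).
Variables (lam : R -> R) (v : 'I_N -> R -> R).
Hypothesis sg : signed_graph g.
Hypothesis hb : eigen_branch g lam v.

Lemma gsym r i j : gamma_t g r i j = gamma_t g r j i.
Proof. by case: sg => gs _; rewrite /gamma_t gs. Qed.

Lemma eig_row s i : lapv (gamma_t g s) (fun k => v k s) i = lam s * v i s.
Proof.
case: sg => gs g0; have [_ _ E] := hb s.
have := congr1 (fun M : 'M[R]_(N,1) => M i 0) E; rewrite /Lt lap_row; last by rewrite /gamma_t g0 ltxx.
by move=> ->; rewrite !mxE.
Qed.

Lemma key t s :
  (lam s - lam t) * (\sum_i v i t * v i s) =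
  (s - t) * (\sum_i lapv (nw g) (fun k => v k t) i * v i s).
Proof.
have E1 : lam s * \sum_i v i t * v i s =
    \sum_i v i s * lapv (gamma_t g s) (fun k => v k t) i.
  rewrite -(lapv_sym _ (fun k => v k t) (fun k => v k s) (gsym s)) mulr_sumr.
  by apply: eq_bigr => i _; rewrite eig_row; ring.
have E2 : lam t * \sum_i v i t * v i s =
    \sum_i v i s * lapv (gamma_t g t) (fun k => v k t) i.
  by rewrite mulr_sumr; apply: eq_bigr => i _; rewrite eig_row; ring.
rewrite mulrBl E1 E2 -sumrB mulr_sumr; apply: eq_bigr => i _.
rewrite !lapv_gamma; ring.
Qed.

Lemma dlam t : derivable lam t 1 -> (forall i, derivable (v i) t 1) ->
  'D_1 lam t * (\sum_i v i t * v i t) =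
  \sum_i lapv (nw g) (fun k => v k t) i * v i t.
Proof.
move=> hl hv.
set H := fun s => \sum_i v i t * v i s.
set B := fun s => \sum_i lapv (nw g) (fun k => v k t) i * v i s.
have dH : derivable H t 1 by exact: derivable_lin.
have dB : derivable B t 1 by exact: derivable_lin.
have df : derivable (lam - cst (lam t)) t 1.
  exact: (derivableB hl (derivable_cst (lam t) t 1)).
have di : derivable (id - cst t) t 1.
  by apply: derivableB; [exact: derivable_id | exact: derivable_cst].
have e : (lam - cst (lam t)) * H = (id - cst t) * B.
  by apply/funext => s /=; exact: key.
have L1 : 'D_1 ((lam - cst (lam t)) * H) t = H t * 'D_1 lam t.
  rewrite (deriveM df dH) (deriveB hl (derivable_cst (lam t) t 1)) derive_cst subr0.
  have -> : (lam - cst (lam t)) t = 0 := subrr (lam t).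
  by rewrite scale0r add0r.
have L2 : 'D_1 ((id - cst t) * B) t = B t.
  rewrite (deriveM di dB) (deriveB (@derivable_id _ _ t 1) (derivable_cst t t 1)).
  have -> : (id - cst t) t = 0 := subrr t.
  by rewrite derive_cst derive_id scale0r add0r subr0; exact: mulr1.
have : H t * 'D_1 lam t = B t by rewrite -L1 e L2.
by rewrite mulrC.
Qed.

Lemma nw_sym i j : nw g i j = nw g j i.
Proof. by case: sg => gs _; rewrite /nw gs. Qed.
Lemma nw_le0 i j : nw g i j <= 0.
Proof. by rewrite /nw; case: ifP => // /ltW. Qed.
Lemma pwN_sym i j : - pw g i j = - pw g j i.
Proof. by case: sg => gs _; rewrite /pw gs. Qed.
Lemma pwN_le0 i j : - pw g i j <= 0.
Proof. by rewrite /pw oppr_le0; case: ifP => // /negbT; rewrite -leNgt. Qed.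

Lemma Qpos t : 0 < \sum_i v i t * v i t.
Proof.
have [nz _ _] := hb t.
have H0 : forall i : 'I_N, true -> 0 <= v i t * v i t.
  by move=> i _; rewrite -expr2 sqr_ge0.
rewrite lt_def sumr_ge0 // andbT; apply/eqP => /(psumr_eq0P H0) Hz.
move/eqP: nz; apply; apply/matrixP => i j; rewrite !mxE.
by have /eqP := Hz i isT; rewrite mulf_eq0 orbb => /eqP.
Qed.

Lemma Bge0 t : 0 <= \sum_i lapv (nw g) (fun k => v k t) i * v i t.
Proof.
have := quad_ge0 (nw g) (fun k => v k t) nw_sym nw_le0.
by under eq_bigr do rewrite mulrC.
Qed.

Lemma dlam_ge0 t : derivable lam t 1 -> (forall i, derivable (v i) t 1) ->
  0 <= 'D_1 lam t.
Proof.
move=> hl hv; rewrite -(pmulr_lge0 _ (Qpos t)) dlam //; exact: Bge0.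
Qed.

Hypothesis conn : sg_connected g.
Hypothesis hl : forall t : R, derivable lam t 1.
Hypothesis hv : forall (i : 'I_N) (t : R), derivable (v i) t 1.

Lemma main_sec : (forall s t : R, s <= t -> lam s <= lam t) /\
    (forall t : R, lam t = 0 -> 0 < derive1 lam t).
Proof.
split.
  move=> s t st.
  apply: (@ger0_derive1_ndecr R lam s t) => //.
  - by move=> x _; rewrite derive1E; apply: dlam_ge0 => // i; exact: hv.
  - by apply: derivable_within_continuous => x _; exact: hl.
move=> t l0; rewrite derive1E.
have E := dlam t (hl t) (fun i => hv i t).
rewrite -(pmulr_lgt0 _ (Qpos t)) E.
have := Bge0 t; rewrite le_eqVlt => /orP [/eqP B0|//]; exfalso.
have Bn : \sum_i v i t * lapv (nw g) (fun k => v k t) i = 0.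
  by rewrite [RHS]B0; apply: eq_bigr => i _; exact: mulrC.
have En := quad_eq0 (nw g) (fun k => v k t) nw_sym nw_le0 Bn.
have Bp : \sum_i v i t * lapv (fun a b => - pw g a b) (fun k => v k t) i = 0.
  transitivity (t * \sum_i v i t * lapv (nw g) (fun k => v k t) i); last first.
    by rewrite Bn mulr0.
  rewrite mulr_sumr; apply: eq_bigr => i _; rewrite lapvN.
  have := eig_row t i; rewrite lapv_gamma l0 mul0r => /eqP; rewrite addr_eq0 => /eqP ->.
  ring.
have Ep := quad_eq0 (fun a b => - pw g a b) (fun k => v k t) pwN_sym pwN_le0 Bp.
have edge : forall a b, g a b != 0 -> v a t = v b t.
  move=> a b gab; case: (ltP (g a b) 0) => h.
    by apply: En; rewrite /nw h.
  by apply: Ep; rewrite /pw ltNge h /= oppr_eq0.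
have [nz hs _] := hb t.
move/eqP: nz; apply; apply/matrixP => i j; rewrite !mxE.
have cst : forall k, v k t = v i t.
  move=> k; have /connectP [p pp ->] := conn i k.
  by rewrite -(@path_const R N _ (fun k => v k t) edge _ _ pp).
rewrite (eq_bigr (fun _ => v i t)) in hs; last by move=> k _; exact: cst.
move: hs; rewrite sumr_const card_ord => /eqP; rewrite mulrn_eq0 => /orP [|/eqP //].
by move=> /eqP N0; have := ltn_ord i; rewrite [X in (_ < X)%N]N0.
Qed.

End Main.


Theorem mainTheorem5 (R : realType) (N : nat) (g : 'I_N -> 'I_N -> R) :
  signed_graph g -> sg_connected g ->
  forall (lam : R -> R) (v : 'I_N -> R -> R),
    (forall t : R, derivable lam t 1) ->
    (forall (i : 'I_N) (t : R), derivable (v i) t 1) ->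
    eigen_branch g lam v ->
    (forall s t : R, s <= t -> lam s <= lam t) /\
    (forall t : R, lam t = 0 -> 0 < derive1 lam t).
Proof.
move=> sg conn lam v hl hv hb.
exact: (@main_sec R N g lam v sg hb conn hl hv).
Qed.
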